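(* There exist 4-GDDs of types $28^9 19^1$, $28^9 25^1$ and $28^9 31^1$.
   Context: For a set $K$ of positive integers, a $K$-GDD (group divisible design) is a triple $(V,\mathcal G,\mathcal B)$ where $V$ is a finite set, $\mathcal G$ is a partition of $V$ into subsets called groups, $\mathcal B$ is a nonempty collection of subsets of $V$ (blocks) with sizes in $K$, such that every pair of points from distinct groups lies in exactly one block and no pair of points from the same group lies in any block. A $k$-GDD means a $\{k\}$-GDD. Type $g^u m^1$ means $u$ groups of size $g$ and one group of size $m$. *)

(* Defs.v *)
From mathcomp Require Import all_boot.
Set Implicit Arguments. Unset Strict Implicit. Unset Printing Implicit Defensive.

Definition is_GDD (T : finType) (K : pred nat)
    (G : {set {set T}}) (B : {set {set T}}) : Prop :=
  [/\ partition G [set: T],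
      B != set0,
      (forall b, b \in B -> K #|b|),
      (forall x y : T, x != y -> pblock G x != pblock G y ->
         #|[set b in B | (x \in b) && (y \in b)]| = 1) &
      (forall x y : T, x != y -> pblock G x = pblock G y ->
         forall b, b \in B -> ~~ ((x \in b) && (y \in b)))].

Definition is_kGDD (T : finType) (k : nat) G B := @is_GDD T (pred1 k) G B.

Definition has_type_gum (T : finType) (G : {set {set T}}) (g u m : nat) : Prop :=
  perm_eq [seq #|A| | A : {set T} in G] (rcons (nseq u g) m).

Definition exists_kGDD_gum (k g u m : nat) : Prop :=
  exists (T : finType) (G B : {set {set T}}),
    is_kGDD k G B /\ has_type_gum G g u m.

(* Main.v *)
Require Import Defs.
From mathcomp Require Import all_boot.
From Stdlib Require NArith.
From Corelib Require Import BinNums.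
Set Implicit Arguments. Unset Strict Implicit. Unset Printing Implicit Defensive.

Definition nbrs (T : eqType) (blocks : seq (seq T)) (x : T) : seq T :=
  flatten [seq [seq z <- s | z != x] | s <- blocks & x \in s].

Definition enc (n : nat) : N := bin_of_nat n.

Definition gcheck (v ng : nat) (grp : nat -> nat) (blocks : seq (seq N))
  (sizes : seq nat) : bool :=
  [&& blocks != [::],
      all (fun s => (size s == 4) && uniq s && all (fun z => nat_of_bin z < v) s) blocks,
      all (fun x => sort BinNat.N.leb (nbrs blocks (enc x)) == [seq enc y | y <- iota 0 v & grp y != grp x]) (iota 0 v),
      all (fun x => grp x < ng) (iota 0 v),
      all (fun n => 0 < n) sizes &
      [seq count (fun y => grp y == i) (iota 0 v) | i <- iota 0 ng] == sizes].

Lemma enc_inj : injective enc.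
Proof. exact: (can_inj bin_of_natK). Qed.

Lemma card_ord_pred v (P : pred nat) :
  #|[set x : 'I_v | P (val x)]| = count P (iota 0 v).
Proof.
rewrite cardE /enum_mem size_filter -val_enum_ord count_map -enumT.
by apply: eq_count => x; rewrite /= inE.
Qed.

Lemma count_nbrs (T : eqType) (blocks : seq (seq T)) x y : y != x ->
  all uniq blocks ->
  count_mem y (nbrs blocks x) = count (fun s => (x \in s) && (y \in s)) blocks.
Proof.
move=> yx; elim: blocks => [|s bl IH] //= /andP[us ub].
rewrite /nbrs /=; case: (x \in s) => /=.
  rewrite count_cat -/(nbrs bl x) IH // count_uniq_mem ?filter_uniq //.
  by rewrite mem_filter yx.
by rewrite -/(nbrs bl x) IH.
Qed.

Lemma gcheck_sound v ng grp blocks sizes :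
  gcheck v ng grp blocks sizes ->
  exists (T : finType) (G B : {set {set T}}),
    is_kGDD 4 G B /\ perm_eq [seq #|A| | A : {set T} in G] sizes.
Proof.
case/andP=> ne /and5P[/allP Hb /allP Hn /allP Hg /allP Hpos /eqP Hs].
pose toS (s : seq N) : {set 'I_v} := [set x : 'I_v | enc (val x) \in s].
pose B : {set {set 'I_v}} := [set S | S \in map toS blocks].
pose G : {set {set 'I_v}} := preim_partition (fun x : 'I_v => grp x) [set: 'I_v].
have partG : partition G [set: 'I_v] := preim_partitionP _ _.
have pbG (x y : 'I_v) : (y \in pblock G x) = (grp x == grp y).
  by rewrite (pblock_equivalence_partition) // ?inE //; split=> // /eqP ->.
have pbE (x y : 'I_v) : (pblock G x == pblock G y) = (grp x == grp y).
  apply/eqP/idP => [e|/eqP e]; first by rewrite -pbG e mem_pblock; case/and3P: partG => /eqP -> _ _; rewrite inE.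
  apply/setP => z; by rewrite !pbG e.
have ublocks : all uniq blocks by apply/allP => s /Hb /andP[/andP[_ ->]].
have cntL (x y : 'I_v) : x != y ->
  count (fun s => (enc (val x) \in s) && (enc (val y) \in s)) blocks = (grp x != grp y).
  move=> xy; rewrite -count_nbrs //; last first.
    by apply/negP => /eqP /enc_inj /val_inj /eqP; rewrite eq_sym (negbTE xy).
  have xin : val x \in iota 0 v by rewrite mem_iota /= ltn_ord.
  move/eqP: (Hn _ xin) => e; have /permEl := perm_sort BinNat.N.leb (nbrs blocks (enc x)); rewrite e => /permP H; rewrite -H.
  rewrite count_uniq_mem; last by rewrite map_inj_uniq ?filter_uniq ?iota_uniq //; exact: enc_inj.
  rewrite mem_map; last exact: enc_inj.
  rewrite mem_filter mem_iota /= ltn_ord andbT.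
  by rewrite eq_sym.
have toSin (s : seq N) (z : 'I_v) : (z \in toS s) = (enc (val z) \in s) by rewrite inE.
have inB b : b \in B -> exists2 s, s \in blocks & b = toS s.
  by rewrite inE => /mapP.
have nonempty i : i < ng -> exists x : 'I_v, grp x = i.
  move=> iltn.
  have szs : size sizes = ng by rewrite -Hs size_map size_iota.
  have : 0 < nth 0 sizes i by apply: Hpos; rewrite mem_nth // szs.
  rewrite -Hs (nth_map 0) ?size_iota // nth_iota // add0n -has_count => /hasP[y].
  rewrite mem_iota /= => ylt /eqP gy.
  by exists (Ordinal ylt).
exists 'I_v, G, B; split.
  rewrite /is_kGDD /is_GDD; split.
  - exact: partG.
  - move: ne; case E: blocks => [|s0 bl] // _.
    have s0b : s0 \in blocks by rewrite E mem_head.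
    by apply/set0Pn; exists (toS s0); rewrite inE map_f.
  - move=> b /inB [s sin ->]; rewrite /= (card_ord_pred v (fun n => enc n \in s)).
    have /andP[/andP[/eqP sz us] alls] := Hb s sin.
    rewrite -size_filter -sz -(size_map enc); apply/eqP/perm_size/uniq_perm.
    + by rewrite map_inj_uniq ?filter_uniq ?iota_uniq //; exact: enc_inj.
    + exact: us.
    move=> z; apply/mapP/idP => [[n]|zs]; first by rewrite mem_filter => /andP[? _] ->.
    exists (nat_of_bin z); last by rewrite /enc nat_of_binK.
    rewrite mem_filter mem_iota /= /enc nat_of_binK zs /=.
    exact: (allP alls z zs).
  - move=> x y xy; rewrite pbE => gxy.
    have c1 := cntL x y xy; rewrite gxy /= in c1.
    move: c1; rewrite -size_filter.
    case E: (filter _ blocks) => [|s0 [|? ?]] // _.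
    have s0in : s0 \in filter (fun s => (enc (val x) \in s) && (enc (val y) \in s)) blocks by rewrite E mem_head.
    rewrite mem_filter in s0in; case/andP: s0in => /andP[xs0 ys0] s0b.
    suff -> : [set b in B | (x \in b) && (y \in b)] = [set toS s0] by rewrite cards1.
    apply/setP => b; rewrite !inE; apply/andP/eqP => [[bB /andP[xb yb]]|->].
      have bB' : b \in B by rewrite inE.
      case: (inB b bB') => s sb eb; rewrite eb in xb yb *.
      rewrite !toSin in xb yb.
      have : s \in filter (fun s => (enc (val x) \in s) && (enc (val y) \in s)) blocks by rewrite mem_filter xb yb.
      by rewrite E inE => /eqP ->.
    by rewrite map_f // !toSin xs0 ys0.
  - move=> x y xy /eqP; rewrite pbE => gxy b /inB[s sb ->]; rewrite !toSin.
    have c0 := cntL x y xy; rewrite gxy /= in c0.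
    apply/negP => Ps; move: c0; rewrite -size_filter.
    have : s \in filter (fun s => (enc (val x) \in s) && (enc (val y) \in s)) blocks by rewrite mem_filter Ps.
    by case: (filter _ _).
pose S (i : nat) : {set 'I_v} := [set x : 'I_v | grp x == i].
have permG : perm_eq (enum G) (map S (iota 0 ng)).
  apply: uniq_perm; first exact: enum_uniq.
    rewrite map_inj_in_uniq ?iota_uniq // => i j; rewrite !mem_iota /= => il jl eSij.
    have [x gx] := nonempty i il.
    have : x \in S i by rewrite inE gx.
    by rewrite eSij inE gx => /eqP.
  move=> A; rewrite mem_enum; apply/imsetP/mapP => [[x _ ->]|[i il ->]].
    exists (grp x); first by rewrite mem_iota /= Hg // mem_iota /= ltn_ord.
    by apply/setP => z; rewrite !inE eq_sym.
  rewrite mem_iota /= in il; have [x gx] := nonempty i il.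
  exists x; first by rewrite inE.
  by apply/setP => z; rewrite !inE gx eq_sym.
have e : [seq #|S i| | i <- iota 0 ng] = sizes.
  by rewrite -Hs; apply: eq_map => i; exact: (card_ord_pred v (fun n => grp n == i)).
have := perm_map (fun A : {set 'I_v} => #|A|) permG.
by rewrite -map_comp /comp e.
Qed.

Definition shift (g p : nat) : nat :=
  if p < 252 then (p %/ 126) * 126 + (p %% 126 + g) %% 126
  else if p == 252 then 252
  else 253 + 3 * ((p - 253) %/ 3) + ((p - 253) %% 3 + g) %% 3.

Definition develop (n : nat) (bs : seq (seq nat)) : seq (seq nat) :=
  flatten [seq [seq map (shift g) b | g <- iota 0 n] | b <- bs].

Definition allblocks (full : seq (seq nat)) : seq (seq nat) :=
  develop 126 full ++ develop 42 [:: [:: 252; 0; 42; 84]; [:: 252; 126; 168; 210]].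

Definition grp (p : nat) : nat := if p < 252 then (p %% 126) %% 9 else 9.
Definition full19 : seq (seq nat) := [:: [:: 0; 7; 28; 140]; [:: 0; 14; 49; 210]; [:: 0; 56; 147; 175]; [:: 0; 154; 224; 231]; [:: 0; 168; 182; 203]; [:: 28; 34; 228; 108]; [:: 28; 106; 192; 18]; [:: 8; 250; 87; 102]; [:: 62; 142; 123; 66]; [:: 168; 148; 144; 34]; [:: 168; 202; 234; 106]; [:: 55; 114; 52; 32]; [:: 1; 96; 88; 122]; [:: 241; 86; 218; 49]; [:: 151; 68; 146; 49]; [:: 113; 170; 91; 178]; [:: 41; 152; 91; 214]; [:: 190; 133; 177; 230]; [:: 244; 133; 159; 176]; [:: 207; 209; 240; 210]; [:: 171; 155; 222; 210]; [:: 210; 132; 50; 74]; [:: 210; 204; 104; 38]; [:: 110; 109; 121; 160]; [:: 2; 73; 103; 232]; [:: 180; 71; 30; 227]; [:: 198; 125; 12; 137]; [:: 108; 163; 22; 201]; [:: 18; 145; 76; 219]; [:: 219; 130; 104; 29]; [:: 201; 220; 50; 83]; [:: 253; 33; 4; 218]; [:: 253; 11; 240; 160]; [:: 256; 51; 94; 146]; [:: 256; 101; 222; 232]; [:: 259; 0; 109; 239]; [:: 259; 26; 165; 241]; [:: 262; 0; 73; 167]; [:: 262; 44; 129; 151]; [:: 265; 18; 16; 140]; [:: 265; 50; 243; 142]; [:: 268; 108; 124; 140]; [:: 268; 104; 135; 250]].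
Definition full25 : seq (seq nat) := [:: [:: 0; 7; 28; 140]; [:: 0; 14; 49; 210]; [:: 0; 56; 147; 175]; [:: 0; 154; 224; 231]; [:: 0; 168; 182; 203]; [:: 68; 146; 22; 241]; [:: 86; 218; 76; 151]; [:: 116; 226; 169; 119]; [:: 80; 208; 223; 119]; [:: 86; 81; 103; 15]; [:: 68; 45; 121; 69]; [:: 79; 139; 21; 159]; [:: 61; 211; 21; 177]; [:: 151; 89; 77; 93]; [:: 241; 107; 77; 75]; [:: 209; 168; 207; 143]; [:: 155; 168; 171; 179]; [:: 177; 131; 224; 220]; [:: 159; 149; 224; 130]; [:: 218; 70; 41; 89]; [:: 146; 70; 113; 107]; [:: 26; 51; 18; 246]; [:: 44; 33; 108; 174]; [:: 148; 226; 12; 123]; [:: 202; 208; 30; 87]; [:: 196; 128; 71; 158]; [:: 196; 236; 125; 248]; [:: 214; 161; 100; 113]; [:: 178; 161; 82; 41]; [:: 253; 9; 88; 155]; [:: 253; 119; 174; 250]; [:: 256; 117; 52; 209]; [:: 256; 119; 246; 142]; [:: 259; 39; 13; 224]; [:: 259; 122; 141; 244]; [:: 262; 3; 85; 224]; [:: 262; 32; 195; 190]; [:: 265; 99; 40; 140]; [:: 265; 113; 186; 142]; [:: 268; 27; 58; 140]; [:: 268; 41; 150; 250]; [:: 271; 21; 1; 233]; [:: 271; 2; 225; 154]; [:: 274; 21; 55; 215]; [:: 274; 110; 153; 154]].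
Definition full31 : seq (seq nat) := [:: [:: 0; 7; 28; 140]; [:: 0; 14; 49; 210]; [:: 0; 56; 147; 175]; [:: 0; 154; 224; 231]; [:: 0; 168; 182; 203]; [:: 59; 191; 26; 70]; [:: 95; 173; 44; 70]; [:: 180; 79; 56; 127]; [:: 198; 61; 56; 181]; [:: 210; 236; 179; 176]; [:: 210; 128; 143; 230]; [:: 17; 200; 104; 91]; [:: 53; 164; 50; 91]; [:: 50; 4; 82; 213]; [:: 104; 94; 100; 249]; [:: 26; 99; 56; 149]; [:: 44; 27; 56; 131]; [:: 130; 226; 70; 248]; [:: 220; 208; 70; 158]; [:: 194; 153; 143; 231]; [:: 212; 225; 179; 231]; [:: 91; 75; 149; 67]; [:: 91; 93; 131; 31]; [:: 225; 139; 84; 128]; [:: 153; 211; 84; 236]; [:: 116; 97; 82; 148]; [:: 80; 43; 100; 202]; [:: 253; 36; 58; 143]; [:: 253; 107; 213; 166]; [:: 256; 90; 40; 179]; [:: 256; 89; 249; 184]; [:: 259; 93; 46; 203]; [:: 259; 29; 198; 196]; [:: 262; 75; 10; 203]; [:: 262; 83; 180; 196]; [:: 265; 0; 1; 173]; [:: 265; 38; 225; 154]; [:: 268; 0; 55; 191]; [:: 268; 74; 153; 154]; [:: 271; 87; 28; 179]; [:: 271; 23; 225; 202]; [:: 274; 123; 28; 143]; [:: 274; 5; 153; 148]; [:: 277; 114; 28; 248]; [:: 277; 2; 246; 214]; [:: 280; 96; 28; 158]; [:: 280; 110; 174; 178]].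

Lemma ex_of (m : nat) (full : seq (seq nat)) :
  gcheck (252 + m) 10 grp (map (map enc) (allblocks full)) (rcons (nseq 9 28) m) ->
  exists_kGDD_gum 4 28 9 m.
Proof.
move/gcheck_sound => [T [G [B [H1 H2]]]].
by exists T, G, B; split.
Qed.

Theorem lemma2p6 :
  [/\ exists_kGDD_gum 4 28 9 19,
      exists_kGDD_gum 4 28 9 25 &
      exists_kGDD_gum 4 28 9 31].
Proof.
split.
- apply: (@ex_of 19 full19); vm_compute; reflexivity.
- apply: (@ex_of 25 full25); vm_compute; reflexivity.
- apply: (@ex_of 31 full31); vm_compute; reflexivity.
Qed.
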